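(* Let $(X,d)$ be an infinite compact metric space and $f_{1,\infty}=\{f_n\}_{n\ge1}$ a sequence of maps $X\to X$ each of which is an isometry. Then $(X,f_{1,\infty})$ does not satisfy Banks's condition.
   Context: Write $f_1^n=f_n\circ\cdots\circ f_1$. $(X,f_{1,\infty})$ satisfies Banks's condition if for any three non-empty open sets $U,V,W\subseteq X$ there is $n\in\mathbb{N}$ with $f_1^n(U)\cap V\neq\emptyset$ and $f_1^n(U)\cap W\ne\emptyset$. *)

(* Defs.v *)
From Stdlib Require Import Reals List.
Open Scope R_scope.

Definition is_metric {X : Type} (d : X -> X -> R) : Prop :=
  (forall x y, 0 <= d x y) /\
  (forall x y, d x y = 0 <-> x = y) /\
  (forall x y, d x y = d y x) /\
  (forall x y z, d x z <= d x y + d y z).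

Definition metric_open {X : Type} (d : X -> X -> R) (U : X -> Prop) : Prop :=
  forall x, U x -> exists eps, 0 < eps /\ forall y, d x y < eps -> U y.

Definition metric_compact {X : Type} (d : X -> X -> R) : Prop :=
  forall (I : Type) (U : I -> X -> Prop),
    (forall i, metric_open d (U i)) ->
    (forall x, exists i, U i x) ->
    exists l : list I, forall x, exists i, In i l /\ U i x.

Definition infinite_type (X : Type) : Prop :=
  ~ exists l : list X, forall x : X, In x l.

Definition isometry {X : Type} (d : X -> X -> R) (f : X -> X) : Prop :=
  forall x y, d (f x) (f y) = d x y.

(* Non-autonomous iterate: f_1^n = f_n o ... o f_1 (f is indexed from 1;
   f 0 is never used); f_1^0 = id. *)
Fixpoint f_iter {X : Type} (f : nat -> X -> X) (n : nat) : X -> X :=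
  match n with
  | O => fun x => x
  | S m => fun x => f (S m) (f_iter f m x)
  end.

Definition banks_condition {X : Type} (d : X -> X -> R) (f : nat -> X -> X) : Prop :=
  forall U V W : X -> Prop,
    metric_open d U -> (exists x, U x) ->
    metric_open d V -> (exists x, V x) ->
    metric_open d W -> (exists x, W x) ->
    exists n : nat, (1 <= n)%nat /\
      (exists x, U x /\ V (f_iter f n x)) /\
      (exists x, U x /\ W (f_iter f n x)).

(* Main.v *)
Require Import Defs.
From Stdlib Require Import Reals List Lra Classical.
Open Scope R_scope.

Lemma ball_open {X : Type} (d : X -> X -> R) (Hd : is_metric d) c r :
  metric_open d (fun y => d c y < r).
Proof.
  destruct Hd as [H0 [H1 [H2 H3]]].
  intros y Hy. exists (r - d c y). split; [lra|].
  intros z Hz. pose proof (H3 c y z). lra.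
Qed.

Lemma iter_iso {X : Type} (d : X -> X -> R) (f : nat -> X -> X)
  (Hiso : forall n : nat, (1 <= n)%nat -> isometry d (f n)) :
  forall n x y, d (f_iter f n x) (f_iter f n y) = d x y.
Proof.
  induction n; intros x y; simpl; auto.
  rewrite (Hiso (S n)); [apply IHn|]. apply le_n_S, le_0_n.
Qed.

Theorem lemma4p5 (X : Type) (d : X -> X -> R) (f : nat -> X -> X)
  (Hd : is_metric d) (Hcpt : metric_compact d) (Hinf : infinite_type X)
  (Hiso : forall n : nat, (1 <= n)%nat -> isometry d (f n)) :
  ~ banks_condition d f.
Proof.
  intro HB.
  assert (Hpq : exists p q : X, p <> q).
  { apply NNPP. intro Hn. apply Hinf.
    destruct (classic (exists x : X, True)) as [[p _]|Hne].
    - exists (p :: nil). intro x. left. apply NNPP. intro Hx.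
      apply Hn. exists p, x. auto.
    - exists nil. intro x. exfalso. apply Hne. exists x. auto. }
  destruct Hpq as [p [q Hpq]].
  pose proof Hd as [H0 [H1 [H2 H3]]].
  set (D := d p q).
  assert (HD : 0 < D).
  { unfold D. destruct (H0 p q) as [h|h]; auto. exfalso. apply Hpq, H1. auto. }
  destruct (HB (fun y => d p y < D/8) (fun y => d p y < D/4) (fun y => d q y < D/4))
    as [n [_ [[x [Ux Vx]] [y [Uy Wy]]]]];
    try apply ball_open; auto;
    try (exists p; rewrite (proj2 (H1 p p) eq_refl); lra).
  { exists q. rewrite (proj2 (H1 q q) eq_refl). lra. }
  pose proof (iter_iso d f Hiso n x y) as E.
  pose proof (H3 p (f_iter f n x) q).
  pose proof (H3 (f_iter f n x) (f_iter f n y) q).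
  pose proof (H3 x p y).
  pose proof (H2 x p). pose proof (H2 (f_iter f n y) q).
  unfold D in *. lra.
Qed.
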